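(* Let $n\ge 3$ and let $P_n(x)=x^n+a_{n-2}x^{n-2}+\cdots+a_1x+a_0$ be a real monic polynomial whose coefficient of $x^{n-1}$ is zero. For $2\le i\le n$ let $P_i=\frac{i!}{n!}P_n^{(n-i)}$, so that $P_{i-1}=\frac1iP_i'$ for $3\le i\le n$, each $P_i$ is monic of degree $i$ with zero coefficient of $x^{i-1}$, and the constant term of $P_i$ is $b_i=\frac{i!\,(n-i)!}{n!}\,a_{n-i}$. For $3\le i\le n$ define $R_{i-2}$ by $P_i(x)=xP_{i-1}(x)-R_{i-2}(x)$ and put $R^0_{i-2}=R_{i-2}+b_i$ (a polynomial not depending on $b_i$). Then $P_n$ has $n$ distinct real roots if and only if $a_{n-2}<0$ and, for every $i\in\{3,\dots,n\}$ (where, inductively, $P_{i-1}$ has $i-1$ distinct real roots $\alpha^{(i-1)}_1<\cdots<\alpha^{(i-1)}_{i-1}$): - if $i$ is even, $$\max_{k\in\{1,\dots,\frac{i-2}{2}\}}R^0_{i-2}\big(\alpha^{(i-1)}_{2k}\big)<b_i<\min_{k\in\{0,\dots,\frac{i-2}{2}\}}R^0_{i-2}\big(\alpha^{(i-1)}_{2k+1}\big);$$ - if $i$ is odd, $$\max_{k\in\{0,\dots,\frac{i-3}{2}\}}R^0_{i-2}\big(\alpha^{(i-1)}_{2k+1}\big)<b_i<\min_{k\in\{1,\dots,\frac{i-1}{2}\}}R^0_{i-2}\big(\alpha^{(i-1)}_{2k}\big).$$ (In particular each of these open intervals is nonempty.)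
   Context: $P_n^{(m)}$ denotes the $m$-th derivative. The condition $a_{n-2}<0$ is equivalent to $P_2(x)=x^2+\frac{2(n-2)!}{n!}a_{n-2}$ having two distinct real roots. $R_{i-2}(x)=xP_{i-1}(x)-P_i(x)$ has constant term $-b_i$, and $R^0_{i-2}$ is $R_{i-2}$ with its constant term removed. *)

(* Defs.v *)
From HB Require Import structures.
From mathcomp Require Import all_boot all_order all_algebra.
Set Implicit Arguments. Unset Strict Implicit. Unset Printing Implicit Defensive.
Import Order.TTheory GRing.Theory Num.Theory.
Local Open Scope ring_scope.

Section Defs.
Variable R : rcfType.

Definition Pi (n : nat) (p : {poly R}) (i : nat) : {poly R} :=
  ((i`!)%:R / (n`!)%:R) *: p^`(n - i).

Definition bi (n : nat) (p : {poly R}) (i : nat) : R :=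
  ((i`! * (n - i)`!)%N%:R / (n`!)%:R) * p`_(n - i).

(* R_{i-2} defined by P_i = x P_{i-1} - R_{i-2}  (indexed here by i) *)
Definition Rm2 (n : nat) (p : {poly R}) (i : nat) : {poly R} :=
  'X * Pi n p i.-1 - Pi n p i.

Definition R0m2 (n : nat) (p : {poly R}) (i : nat) : {poly R} :=
  Rm2 n p i + (bi n p i)%:P.

(* The interlacing condition at step i, where s = [:: alpha_1; ...; alpha_{i-1}]
   (0-indexed: alpha_m = s`_(m-1)). Max/min over the (nonempty) index ranges are
   written out as pointwise inequalities. *)
Definition step_cond (n : nat) (p : {poly R}) (i : nat) (s : seq R) : Prop :=
  if odd i then
    (forall k : nat, (k <= (i - 3) %/ 2)%N -> (R0m2 n p i).[s`_(2 * k)] < bi n p i) /\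
    (forall k : nat, (1 <= k <= (i - 1) %/ 2)%N -> bi n p i < (R0m2 n p i).[s`_(2 * k - 1)])
  else
    (forall k : nat, (1 <= k <= (i - 2) %/ 2)%N -> (R0m2 n p i).[s`_(2 * k - 1)] < bi n p i) /\
    (forall k : nat, (k <= (i - 2) %/ 2)%N -> bi n p i < (R0m2 n p i).[s`_(2 * k)]).

End Defs.

(* Main.v *)
Require Import Defs.
From HB Require Import structures.
From mathcomp Require Import all_boot all_order all_algebra.
From mathcomp Require Import polyrcf.
From mathcomp Require Import zify ring lra.
Import Order.TTheory GRing.Theory Num.Theory.
Local Open Scope ring_scope.

Section Aux.
Variable R : rcfType.
Implicit Types (p q : {poly R}).

Lemma coefPi n p i k : (Pi n p i)`_k =
  (i`!%:R / n`!%:R) * (p`_(n - i + k) *+ (n - i + k) ^_ (n - i)).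
Proof. by rewrite /Pi coefZ coef_derivn. Qed.

Lemma coefPi_gt n p i k : size p = n.+1 -> (i <= n)%N -> (i < k)%N -> (Pi n p i)`_k = 0.
Proof.
move=> sp hi hk; rewrite coefPi nth_default ?mul0rn ?mulr0 //; rewrite sp; lia.
Qed.

Lemma coefPi_i n p i : size p = n.+1 -> p \is monic -> (i <= n)%N -> (Pi n p i)`_i = 1.
Proof.
move=> sp mp hi; rewrite coefPi.
have -> : (n - i + i = n)%N by lia.
have : p`_n = 1 by move/monicP: mp; rewrite /lead_coef sp.
move=> ->; have h := ffact_fact (leq_subr i n).
have e : (n - (n - i) = i)%N by lia.
rewrite e in h.
have hn : (n`!%:R : R) != 0 by rewrite pnatr_eq0 -lt0n fact_gt0.
rewrite -h natrM; field.
by rewrite !pnatr_eq0 -!lt0n fact_gt0 ffact_gt0 leq_subr.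
Qed.

Lemma size_Pi n p i : size p = n.+1 -> p \is monic -> (i <= n)%N -> size (Pi n p i) = i.+1.
Proof.
move=> sp mp hi; apply/eqP; rewrite eqn_leq; apply/andP; split.
  by apply/leq_sizeP => j hj; apply: coefPi_gt.
rewrite ltnNge; apply/negP => /(nth_default 0); rewrite coefPi_i // => /eqP; rewrite oner_eq0.
by [].
Qed.

Lemma monic_Pi n p i : size p = n.+1 -> p \is monic -> (i <= n)%N -> Pi n p i \is monic.
Proof.
by move=> sp mp hi; apply/monicP; rewrite /lead_coef size_Pi //= coefPi_i.
Qed.

Lemma deriv_Pi n p i : (1 <= i <= n)%N -> (Pi n p i)^`() = i%:R *: Pi n p i.-1.
Proof.
move=> /andP[h1 h2]; rewrite /Pi derivZ -derivnS scalerA.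
have -> : (n - i.-1 = (n - i).+1)%N by lia.
congr (_ *: _).
case: i h1 h2 => // i _ _ /=; rewrite factS natrM; field.
by rewrite pnatr_eq0 -lt0n fact_gt0.
Qed.

Lemma Pi_n n p : Pi n p n = p.
Proof.
by rewrite /Pi subnn derivn0 divff ?scale1r // pnatr_eq0 -lt0n fact_gt0.
Qed.


Lemma prod_pos (a : R) (l : seq R) : all (fun x => x < a) l -> 0 < \prod_(x <- l) (a - x).
Proof.
elim: l => [|x l IH] /=; first by rewrite big_nil ltr01.
by case/andP=> hx hl; rewrite big_cons mulr_gt0 ?IH // subr_gt0.
Qed.

Lemma prod_sgn (a : R) (l : seq R) :
  all (fun x => a < x) l -> 0 < (-1) ^+ (size l) * \prod_(x <- l) (a - x).
Proof.
elim: l => [|x l IH] /=; first by rewrite big_nil mulr1 ltr01.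
case/andP=> hx hl; rewrite big_cons exprS.
have -> : -1 * (-1) ^+ size l * ((a - x) * \prod_(j <- l) (a - j)) =
   (x - a) * ((-1) ^+ size l * \prod_(j <- l) (a - j)) by ring.
by rewrite mulr_gt0 ?IH // subr_gt0.
Qed.

Lemma Pi_1 n p : (1 <= n)%N -> size p = n.+1 -> p \is monic -> p`_n.-1 = 0 -> Pi n p 1 = 'X.
Proof.
move=> hn sp mp h0; apply/polyP => k; rewrite coefX.
case: k => [|[|k]].
- rewrite coefPi addn0 (_ : (n - 1 = n.-1)%N) ?h0 ?mul0rn ?mulr0 //; lia.
- by rewrite coefPi_i.
- by rewrite coefPi_gt.
Qed.

Lemma Pi_2_0 n p : (2 <= n)%N -> size p = n.+1 ->
  (Pi n p 2).[0] < 0 -> p`_(n - 2) < 0.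
Proof.
move=> hn sp; rewrite horner_coef0 coefPi addn0.
have hf : (0 < (n - 2) ^_ (n - 2))%N by rewrite ffact_gt0.
have hc : 0 < (2`!%:R / n`!%:R : R) by rewrite divr_gt0 // ltr0n fact_gt0.
rewrite pmulr_rlt0 // => h.
by rewrite -(pmulrn_llt0 _ hf).
Qed.

Lemma factor_monic (q : {poly R}) (r : seq R) : q \is monic -> size q = (size r).+1 ->
  uniq r -> all (root q) r -> q = \prod_(z <- r) ('X - z%:P).
Proof.
move=> mq sq ur rr; rewrite {1}(all_roots_prod_XsubC sq rr) ?uniq_rootsE //.
by rewrite (monicP mq) scale1r.
Qed.


Definition alt n p i (s : seq R) :=
  forall j, (j < i.-1)%N -> 0 < (-1) ^+ (i.-1 - j) * (Pi n p i).[s`_j].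

Lemma R0_eval n p i a : (Pi n p i.-1).[a] = 0 ->
  (R0m2 n p i).[a] = bi n p i - (Pi n p i).[a].
Proof.
move=> h; rewrite /R0m2 /Rm2 hornerD hornerC hornerD hornerN mulrC hornerMX h mul0r; ring.
Qed.

Lemma signE m : (-1) ^+ m = (if odd m then -1 else 1 : R).
Proof. by rewrite -signr_odd; case: (odd m); rewrite ?expr1 ?expr0. Qed.

Lemma stepA n p i s : (3 <= i)%N ->
  (forall j, (j < i.-1)%N -> (Pi n p i.-1).[s`_j] = 0) ->
  (step_cond n p i s <-> alt n p i s).
Proof.
move=> hi hr; rewrite /step_cond /alt.
have Hev : forall j, (j < i.-1)%N -> (R0m2 n p i).[s`_j] < bi n p i <-> 0 < (Pi n p i).[s`_j].
  move=> j hj; rewrite R0_eval ?hr //; split => h; lra.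
have Hod : forall j, (j < i.-1)%N -> bi n p i < (R0m2 n p i).[s`_j] <-> (Pi n p i).[s`_j] < 0.
  move=> j hj; rewrite R0_eval ?hr //; split => h; lra.
have mi := modn2 i.
split.
- move=> H j hj; rewrite signE; have mj := modn2 j; have mm := modn2 (i.-1 - j).
  case: (odd i) H mi => [] [H1 H2] mi.
  + case: (odd j) mj => mj.
    * have hk : (1 <= (j.+1) %/ 2 <= (i - 1) %/ 2)%N by lia.
      have := H2 _ hk; rewrite (_ : (2 * (j.+1 %/ 2) - 1 = j)%N); last by lia.
      move/(Hod _ hj) => h; case: (odd (i.-1 - j)) mm => mm; [lra | lia].
    * have hk : (j %/ 2 <= (i - 3) %/ 2)%N by lia.
      have := H1 _ hk; rewrite (_ : (2 * (j %/ 2) = j)%N); last by lia.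
      move/(Hev _ hj) => h; case: (odd (i.-1 - j)) mm => mm; [lia | lra].
  + case: (odd j) mj => mj.
    * have hk : (1 <= (j.+1) %/ 2 <= (i - 2) %/ 2)%N by lia.
      have := H1 _ hk; rewrite (_ : (2 * (j.+1 %/ 2) - 1 = j)%N); last by lia.
      move/(Hev _ hj) => h; case: (odd (i.-1 - j)) mm => mm; [lia | lra].
    * have hk : (j %/ 2 <= (i - 2) %/ 2)%N by lia.
      have := H2 _ hk; rewrite (_ : (2 * (j %/ 2) = j)%N); last by lia.
      move/(Hod _ hj) => h; case: (odd (i.-1 - j)) mm => mm; [lra | lia].
- move=> H.
  have Hs : forall j, (j < i.-1)%N -> (odd (i.-1 - j) -> (Pi n p i).[s`_j] < 0)
                                  /\ (~~ odd (i.-1 - j) -> 0 < (Pi n p i).[s`_j]).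
    move=> j hj; have := H j hj; rewrite signE.
    by case: (odd _) => h; split => // _; lra.
  case: (odd i) mi => mi; split.
  + move=> k hk; have hj : (2 * k < i.-1)%N by lia.
    apply/(Hev _ hj); apply: (proj2 (Hs _ hj)); move: (modn2 (i.-1 - (2 * k)%N)) (modn2 (i.-1 - (2 * k - 1)%N)); case: (odd _) => //= h1; case: (odd _) => //= h2; lia.
  + move=> k hk; have hj : (2 * k - 1 < i.-1)%N by lia.
    apply/(Hod _ hj); apply: (proj1 (Hs _ hj)); move: (modn2 (i.-1 - (2 * k)%N)) (modn2 (i.-1 - (2 * k - 1)%N)); case: (odd _) => //= h1; case: (odd _) => //= h2; lia.
  + move=> k hk; have hj : (2 * k - 1 < i.-1)%N by lia.
    apply/(Hev _ hj); apply: (proj2 (Hs _ hj)); move: (modn2 (i.-1 - (2 * k)%N)) (modn2 (i.-1 - (2 * k - 1)%N)); case: (odd _) => //= h1; case: (odd _) => //= h2; lia.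
  + move=> k hk; have hj : (2 * k < i.-1)%N by lia.
    apply/(Hod _ hj); apply: (proj1 (Hs _ hj)); move: (modn2 (i.-1 - (2 * k)%N)) (modn2 (i.-1 - (2 * k - 1)%N)); case: (odd _) => //= h1; case: (odd _) => //= h2; lia.
Qed.


Lemma srt_lt (r : seq R) a b : sorted <%R r -> (a < b)%N -> (b < size r)%N -> r`_a < r`_b.
Proof.
move=> hs hab hb; apply: (sorted_ltn_nth lt_trans) => //; rewrite inE /=; lia.
Qed.

Lemma srt_le (r : seq R) a b : sorted <%R r -> (a <= b)%N -> (b < size r)%N -> r`_a <= r`_b.
Proof.
move=> hs; rewrite leq_eqVlt => /orP[/eqP -> //|hab] hb; exact/ltW/srt_lt.
Qed.

Lemma root_nth (q : {poly R}) (r : seq R) j : all (root q) r -> (j < size r)%N -> q.[r`_j] = 0.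
Proof. by move=> /allP h hj; apply/eqP/h/mem_nth. Qed.

Lemma step n p i (r : seq R) : size p = n.+1 -> p \is monic -> (2 <= i <= n)%N ->
  sorted <%R r -> size r = i -> all (root (Pi n p i)) r ->
  exists s, [/\ sorted <%R s, size s = i.-1, all (root (Pi n p i.-1)) s & alt n p i s].
Proof.
move=> sp mp /andP[hi2 hin] hs hsz hr.
have inz : (i%:R : R) != 0 by rewrite pnatr_eq0; lia.
have H : forall m, (m <= i.-1)%N -> exists s : seq R, size s = m /\
   forall j, (j < m)%N -> [/\ r`_j < s`_j, s`_j < r`_j.+1 & (Pi n p i.-1).[s`_j] = 0].
  elim=> [|m IH] hm; first by exists [::].
  have [s [ss Hs]] := IH (ltnW hm).
  have hab : r`_m < r`_m.+1 by apply: srt_lt => //; lia.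
  have he : (Pi n p i).[r`_m] = (Pi n p i).[r`_m.+1].
    by rewrite (root_nth _ _ m hr) ?(root_nth _ _ m.+1 hr) // hsz; lia.
  have [c hc hd] := poly_rolle hab he.
  move: hd; rewrite deriv_Pi ?hin ?andbT; last by lia.
  rewrite hornerZ => /eqP; rewrite mulf_eq0 (negbTE inz) /= => /eqP hd.
  exists (rcons s c); split; first by rewrite size_rcons ss.
  move=> j hj; rewrite nth_rcons ss.
  case: ltnP => hjm; first exact: Hs.
  have -> : j = m by lia.
  by rewrite eqxx; move: hc; rewrite in_itv /= => /andP[h1 h2].
have [s [ss Hs]] := H _ (leqnn _).
exists s; split => //.
- apply/(sortedP 0) => j hj.
  rewrite ss in hj; have [_ h1 _] := Hs j (ltac:(lia)); have [h2 _ _] := Hs j.+1 (ltac:(lia)).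
  exact: lt_trans h1 h2.
- by apply/(all_nthP 0) => j hj; rewrite ss in hj; rewrite /root; have [_ _ ->] := Hs j (ltac:(lia)).
- move=> j hj; have [h1 h2 _] := Hs j hj.
  rewrite (factor_monic _ r (monic_Pi _ _ _ sp mp hin)) ?hsz ?(size_Pi _ _ _ sp mp hin) //; last by apply: lt_sorted_uniq.
  rewrite horner_prod -(cat_take_drop j.+1 r) big_cat /=.
  have hA : 0 < \prod_(x <- take j.+1 r) ('X - x%:P).[s`_j].
    under eq_bigr do rewrite hornerXsubC.
    apply: prod_pos; apply/(all_nthP 0) => k; rewrite size_take hsz => hk.
    have hk2 : (k <= j)%N by move: hk; rewrite /minn; case: ifP; lia.
    rewrite nth_take; last by lia.
    apply: le_lt_trans h1; apply: srt_le => //; lia.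
  have hB : 0 < (-1) ^+ (i.-1 - j) * \prod_(x <- drop j.+1 r) ('X - x%:P).[s`_j].
    under eq_bigr do rewrite hornerXsubC.
    have -> : (i.-1 - j = size (drop j.+1 r))%N by rewrite size_drop hsz; lia.
    apply: prod_sgn; apply/(all_nthP 0) => k; rewrite size_drop hsz => hk.
    rewrite nth_drop; apply: lt_le_trans h2 _; apply: srt_le => //; lia.
  rewrite mulrCA; exact: mulr_gt0.
Qed.


Lemma big_pos (q : {poly R}) (a : R) : q \is monic -> exists b, a < b /\ 0 < q.[b].
Proof.
move=> /monicP mq.
have hl : 0 < lead_coef q by rewrite mq ltr01.
have [M HM] := poly_pinfty_gt_lc hl.
exists (`|M| + `|a| + 1); split.
  have := ler_norm a; have := normr_ge0 M; lra.
have h := HM (`|M| + `|a| + 1).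
have h1 := ler_norm M; have h2 := normr_ge0 a.
rewrite mq in h; have := h (ltac:(lra)); lra.
Qed.

Lemma small_sgn (q : {poly R}) m (a : R) : q \is monic -> size q = m.+1 ->
  exists b, b < a /\ 0 < (-1) ^+ m * q.[b].
Proof.
move=> mq sq.
have hsX : size (- 'X : {poly R}) = 2 by rewrite size_polyN size_polyX.
have mq' : (-1) ^+ m *: (q \Po - 'X) \is monic.
  apply/monicP; rewrite lead_coefZ lead_coef_comp ?hsX // lead_coefN lead_coefX.
  by rewrite (monicP mq) sq /= mul1r -exprD -signr_odd addnn odd_double expr0.
have [b [hb1 hb2]] := big_pos _ (- a) mq'.
exists (- b); split; first lra.
by move: hb2; rewrite hornerZ horner_comp hornerN hornerX.
Qed.

Lemma sgn_ivt (q : {poly R}) m1 m2 a b : a < b ->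
  0 < (-1) ^+ m1 * q.[a] -> 0 < (-1) ^+ m2 * q.[b] -> odd m1 != odd m2 ->
  exists x, [/\ a < x, x < b & root q x].
Proof.
move=> hab; rewrite !signE; case: (odd m1); case: (odd m2) => //= h1 h2 _.
- have hp : q.[a] * q.[b] < 0 by nra.
  have [x hx rx] := poly_ivtoo (ltW hab) hp.
  by exists x; move: hx; rewrite in_itv /= => /andP[].
- have hp : q.[a] * q.[b] < 0 by nra.
  have [x hx rx] := poly_ivtoo (ltW hab) hp.
  by exists x; move: hx; rewrite in_itv /= => /andP[].
Qed.

Lemma odd_diff a b : (b = a.+1)%N -> odd a != odd b.
Proof. by move=> ->; rewrite /= ; case: (odd a). Qed.

Lemma roots_from_alt (q : {poly R}) n (s : seq R) : (2 <= n)%N -> q \is monic ->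
  size q = n.+1 -> size s = n.-1 -> sorted <%R s ->
  (forall j, (j < n.-1)%N -> 0 < (-1) ^+ (n.-1 - j) * q.[s`_j]) ->
  exists t, [/\ uniq t, size t = n & all (root q) t].
Proof.
move=> hn mq sq ss srt ha.
have Hx : forall j, (j < n)%N -> exists x, [/\ root q x,
    ((0 < j)%N -> s`_j.-1 < x) & ((j < n.-1)%N -> x < s`_j)].
  move=> j hj; case: (posnP j) => [-> | hj0].
    have [b [hb1 hb2]] := small_sgn _ _ (s`_0) mq sq.
    have [x [h1 h2 h3]] := sgn_ivt _ _ _ _ _ hb1 hb2 (ha 0 (ltac:(lia))) (ltac:(rewrite eq_sym; apply: odd_diff; lia)).
    by exists x; split.
  case: (ltnP j n.-1) => hjn.
    have hlt : s`_j.-1 < s`_j by apply: srt_lt => //; lia.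
    have [x [h1 h2 h3]] := sgn_ivt _ _ _ _ _ hlt (ha j.-1 (ltac:(lia))) (ha j hjn)
       (ltac:(rewrite eq_sym; apply: odd_diff; lia)).
    by exists x; split.
  have [b [hb1 hb2]] := big_pos _ (s`_j.-1) mq.
  have hb : 0 < (-1) ^+ 0 * q.[b] by rewrite expr0 mul1r.
  have [x [h1 h2 h3]] := sgn_ivt _ _ _ _ _ hb1 (ha j.-1 (ltac:(lia))) hb (ltac:(rewrite eq_sym; apply: odd_diff; lia)).
  by exists x; split => // ?; lia.
have H : forall m, (m <= n)%N -> exists t : seq R, size t = m /\
   forall j, (j < m)%N -> [/\ root q t`_j, ((0 < j)%N -> s`_j.-1 < t`_j)
                                 & ((j < n.-1)%N -> t`_j < s`_j)].
  elim=> [|m IH] hm; first by exists [::].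
  have [t [st Ht]] := IH (ltnW hm).
  have [x [h1 h2 h3]] := Hx m hm.
  exists (rcons t x); split; first by rewrite size_rcons st.
  move=> j hj; rewrite nth_rcons st.
  case: ltnP => hjm; first exact: Ht.
  have -> : j = m by lia.
  by rewrite eqxx.
have [t [st Ht]] := H n (leqnn _).
exists t; split => //.
- apply: (@lt_sorted_uniq _ R); apply/(sortedP 0) => j hj.
  rewrite st in hj.
  have [_ _ h1] := Ht j (ltac:(lia)); have [_ h2 _] := Ht j.+1 hj.
  exact: lt_trans (h1 (ltac:(lia))) (h2 (ltac:(lia))).
- by apply/(all_nthP 0) => j hj; rewrite st in hj; have [] := Ht j hj.
Qed.

End Aux.

Arguments step {R n p i r}.
Arguments root_nth {R} q r j.
Arguments Pi_1 {R n p}.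
Arguments Pi_2_0 {R n p}.
Arguments stepA {R n p i s}.
Arguments roots_from_alt {R q n s}.

Theorem theorem2 (R : rcfType) (n : nat) (p : {poly R}) :
  (3 <= n)%N -> size p = n.+1 -> p \is monic -> p`_n.-1 = 0 ->
  ((exists s : seq R, [/\ uniq s, size s = n & all (root p) s]) <->
   (p`_(n - 2) < 0 /\
    forall i : nat, (3 <= i <= n)%N ->
      exists s : seq R,
        [/\ sorted <%R s, size s = i.-1, all (root (Pi n p i.-1)) s
          & step_cond n p i s])).
Proof.
move=> hn sp mp h0; split.
- case=> s0 [us ss rs].
  have claim : forall k, (k <= n - 2)%N -> exists r : seq R,
      [/\ sorted <%R r, size r = (n - k)%N & all (root (Pi n p (n - k))) r].
    elim=> [|k IH] hk.
      exists (sort <=%R s0); split; first by rewrite sort_lt_sorted.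
        by rewrite size_sort subn0.
      rewrite subn0 Pi_n; apply/allP => x; rewrite mem_sort; exact: (allP rs).
    have [r [sr szr rr]] := IH (ltnW hk).
    have [s [s1 s2 s3 _]] := step (i:=(n - k)%N) sp mp (ltac:(apply/andP; split; lia)) sr szr rr.
    exists s; rewrite (_ : (n - k.+1 = (n - k).-1)%N); last by lia.
    by split.
  split.
  + have [r [sr szr rr]] := claim (n - 2)%N (leqnn _).
    rewrite (_ : (n - (n - 2) = 2)%N) in szr rr; last by lia.
    have [s [_ s2 s3 s4]] := step (i:=2) sp mp (ltac:(apply/andP; split; lia)) sr szr rr.
    have e0 := root_nth _ _ 0 s3 (ltac:(rewrite s2; lia)).
    rewrite /= (Pi_1 (ltac:(lia) : (1 <= n)%N) sp mp h0) hornerX in e0.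
    have := s4 0 (ltac:(lia)); rewrite e0 /= expr1 mulN1r oppr_gt0 => h.
    by apply: Pi_2_0 => //; lia.
  + move=> i /andP[hi3 hin].
    have [r [sr szr rr]] := claim (n - i)%N (ltac:(lia)).
    rewrite (_ : (n - (n - i) = i)%N) in szr rr; last by lia.
    have [s [s1 s2 s3 s4]] := step (i:=i) sp mp (ltac:(apply/andP; split; lia)) sr szr rr.
    exists s; split => //.
    apply/stepA => // j hj; apply: root_nth s3 _; rewrite s2 //.
- case=> _ H.
  have [s [sr ss sroot sc]] := H n (ltac:(apply/andP; split; lia)).
  have hr : forall j, (j < n.-1)%N -> (Pi n p n.-1).[s`_j] = 0.
    by move=> j hj; apply: root_nth sroot _; rewrite ss.
  have := (stepA hn hr).1 sc; rewrite /alt Pi_n => ha.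
  have [t [ut st rt]] := roots_from_alt (ltac:(lia) : (2 <= n)%N) mp sp ss sr ha.
  by exists t.
Qed.
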